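(* Consider the iterates of the AdaSMSAG method described in the context, and let $x^*$ be an optimal solution of $\min_{x\in X}\psi(x)$. Suppose that, for a given $k\ge1$, $\alpha_k\beta_k-\theta_k\le 0$ and $\beta_k-L_k>0$, where $L_k:=L_f+L/\mu_k$. Then $$\Gamma_k\le\alpha_k\theta_k\left(D_{k-1}^2-D_k^2\right)+\frac{\|\delta_k\|^2}{2(\beta_k-L_k)}+\alpha_k\langle\delta_k,\;x^*-z_{k-1}\rangle.$$
   Context: Setting: $X\subseteq\mathbb{R}^n$ is a nonempty closed convex set; $\psi=f+h$ where $f(x)=E[F(x,\xi)]$, $h(x)=E[H(x,\xi)]$, $\xi$ a random vector supported on $\Xi\subseteq\mathbb{R}^d$, $F(\cdot,\xi)$ convex with Lipschitz continuous gradient and $H(\cdot,\xi)$ convex (possibly nonsmooth) for every $\xi$; $f$ is convex and differentiable with $\nabla f$ Lipschitz on $X$ with constant $L_f$. $\{\tilde h_\mu\}_{\mu\in(0,\bar\mu]}$ is a smoothing function of $h$ on $X$: each $\tilde h_\mu$ is continuously differentiable and convex on $X$; $\tilde h_\mu(z)\to h(x)$ as $z\to x,\mu\downarrow0$; $|\tilde h_{\mu_2}(x)-\tilde h_{\mu_1}(x)|\le\kappa|\mu_1-\mu_2|$ for all $x\in X$, $\mu_1,\mu_2\in(0,\bar\mu]$ ($\kappa>0$); and $\nabla\tilde h_\mu$ is $L/\mu$-Lipschitz on $X$ ($L>0$). Set $\tilde\psi_\mu:=f+\tilde h_\mu$. A stochastic first-order oracle returns, for input $x\in X$, $\mu>0$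 and a sample $\xi$, a vector $\nabla\tilde\Psi_\mu(x,\xi)$. AdaSMSAG method: inputs $N\ge1$, batch sizes $m_k\ge 1$, $\alpha_k\in(0,1)$, $c>0$, $\mu_0\in(0,\bar\mu]$, $\beta_k>0$, $\theta_k>0$, $z_0=y_0\in X$. For $k=1,\dots,N$: $x_k=\alpha_k z_{k-1}+(1-\alpha_k)y_{k-1}$; $\mu_k=\frac{c\mu_0}{k+c}$; draw samples $\xi_{k,1},\dots,\xi_{k,m_k}$ and set $G_k:=\frac1{m_k}\sum_{i=1}^{m_k}\nabla\tilde\Psi_{\mu_k}(x_k,\xi_{k,i})$; $y_k=\arg\min_{y\in X}\{\langle G_k,y-x_k\rangle+\frac{\beta_k}{2}\|y-x_k\|^2\}$; $z_k=\arg\min_{x\in X}\{\langle G_k,x-x_k\rangle+\frac{\theta_k}{2}\|x-z_{k-1}\|^2\}$. Notation: $\delta_k:=G_k-\nabla\tilde\psi_{\mu_k}(x_k)$; $D_k^2:=\frac{\|x^*-z_k\|^2}{2}$ for $k\ge0$; $\Delta_{\mu_k}:=\tilde\psi_{\mu_k}(y_k)-\tilde\psi_{\mu_k}(x^* )$ for $k\ge0$; $\Gamma_k:=\Delta_{\mu_k}-(1-\alpha_k)\Delta_{\mu_{k-1}}-2\kappa(1-\alpha_k)(\mu_{k-1}-\mu_k)$. *)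

(* Defs.v *)
From HB Require Import structures.
From mathcomp Require Import all_boot all_order all_algebra.
From mathcomp Require Import all_classical all_reals all_analysis.
Set Implicit Arguments. Unset Strict Implicit. Unset Printing Implicit Defensive.
Import Order.TTheory GRing.Theory Num.Theory.
Import numFieldNormedType.Exports.
Local Open Scope classical_set_scope.
Local Open Scope ring_scope.

Section Defs.
Variables (R : realType) (n : nat).
Notation vec := 'rV[R]_n.

Definition dot (u v : vec) : R := \sum_(i < n) u ord0 i * v ord0 i.
Definition enorm (u : vec) : R := Num.sqrt (dot u u).

Definition convex_set_E (X : set vec) : Prop :=
  forall x y t, X x -> X y -> 0 <= t <= 1 -> X (t *: x + (1 - t) *: y).

Definition convex_fun_on (X : set vec) (f : vec -> R) : Prop :=
  forall x y t, X x -> X y -> 0 <= t <= 1 ->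
    f (t *: x + (1 - t) *: y) <= t * f x + (1 - t) * f y.

Definition is_gradient_at (f : vec -> R) (g : vec) (x : vec) : Prop :=
  forall eps : R, 0 < eps -> exists delta : R, 0 < delta /\
    forall y : vec, enorm (y - x) < delta ->
      `|f y - f x - dot g (y - x)| <= eps * enorm (y - x).

Definition lipschitz_on_E (X : set vec) (g : vec -> vec) (Lc : R) : Prop :=
  forall x y, X x -> X y -> enorm (g x - g y) <= Lc * enorm (x - y).

Definition contin_on (X : set vec) (g : vec -> vec) : Prop :=
  forall x, X x -> forall eps : R, 0 < eps -> exists delta : R, 0 < delta /\
    forall y, X y -> enorm (y - x) < delta -> enorm (g y - g x) < eps.

Definition smoothing_function (X : set vec) (h : vec -> R)
    (ht : R -> vec -> R) (ght : R -> vec -> vec) (mubar kappa L : R) : Prop :=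
  (forall mu, 0 < mu <= mubar ->
         (forall x, X x -> is_gradient_at (ht mu) (ght mu x) x)
         /\ contin_on X (ght mu) /\ convex_fun_on X (ht mu)) /\
      (forall x, X x -> forall eps : R, 0 < eps -> exists delta : R, 0 < delta /\
         forall z mu, X z -> enorm (z - x) < delta -> 0 < mu <= mubar -> mu < delta ->
           `|ht mu z - h x| < eps) /\
      (forall x mu1 mu2, X x -> 0 < mu1 <= mubar -> 0 < mu2 <= mubar ->
         `|ht mu2 x - ht mu1 x| <= kappa * `|mu1 - mu2|) /\
      0 < kappa /\ 0 < L /\
      (forall mu, 0 < mu <= mubar -> lipschitz_on_E X (ght mu) (L / mu)).

Definition is_argmin (X : set vec) (phi : vec -> R) (y : vec) : Prop :=
  X y /\ forall w, X w -> phi y <= phi w.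

End Defs.

(* Main.v *)
Require Import Defs.
From HB Require Import structures.
From mathcomp Require Import all_boot all_order all_algebra.
From mathcomp Require Import all_classical all_reals all_analysis.
From mathcomp Require Import ring lra.
Import Order.TTheory GRing.Theory Num.Theory.
Import numFieldNormedType.Exports.
Local Open Scope classical_set_scope.
Local Open Scope ring_scope.

Lemma dotC {R : realType} {n : nat} (u v : 'rV[R]_n) : dot u v = dot v u.
Proof. by rewrite /dot; apply: eq_bigr => i _; rewrite mulrC. Qed.

Lemma dotDl {R : realType} {n : nat} (u v w : 'rV[R]_n) : dot (u + v) w = dot u w + dot v w.
Proof. by rewrite /dot -big_split /=; apply: eq_bigr => i _; rewrite !mxE mulrDl. Qed.

Lemma dotZl {R : realType} {n : nat} a (u w : 'rV[R]_n) : dot (a *: u) w = a * dot u w.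
Proof. by rewrite /dot mulr_sumr; apply: eq_bigr => i _; rewrite !mxE mulrA. Qed.

Lemma dotNl {R : realType} {n : nat} (u w : 'rV[R]_n) : dot (- u) w = - dot u w.
Proof. by rewrite -scaleN1r dotZl mulN1r. Qed.

Lemma dotBl {R : realType} {n : nat} (u v w : 'rV[R]_n) : dot (u - v) w = dot u w - dot v w.
Proof. by rewrite dotDl dotNl. Qed.

Lemma dotDr {R : realType} {n : nat} (u v w : 'rV[R]_n) : dot w (u + v) = dot w u + dot w v.
Proof. by rewrite dotC dotDl !(dotC w). Qed.

Lemma dotZr {R : realType} {n : nat} a (u w : 'rV[R]_n) : dot w (a *: u) = a * dot w u.
Proof. by rewrite dotC dotZl dotC. Qed.

Lemma dotBr {R : realType} {n : nat} (u v w : 'rV[R]_n) : dot w (u - v) = dot w u - dot w v.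
Proof. by rewrite dotC dotBl !(dotC w). Qed.

Lemma dot_ge0 {R : realType} {n : nat} (u : 'rV[R]_n) : 0 <= dot u u.
Proof. by rewrite /dot; apply: sumr_ge0 => i _; rewrite -expr2 sqr_ge0. Qed.

Lemma enorm_ge0 {R : realType} {n : nat} (u : 'rV[R]_n) : 0 <= enorm u.
Proof. exact: sqrtr_ge0. Qed.

Lemma enorm_sq {R : realType} {n : nat} (u : 'rV[R]_n) : enorm u ^+ 2 = dot u u.
Proof. by rewrite /enorm sqr_sqrtr // dot_ge0. Qed.

Lemma enormZ {R : realType} {n : nat} a (u : 'rV[R]_n) : 0 <= a -> enorm (a *: u) = a * enorm u.
Proof.
move=> a0; rewrite /enorm dotZl dotZr mulrA -expr2 sqrtrM ?sqr_ge0 //.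
by rewrite sqrtr_sqr ger0_norm.
Qed.

Lemma CS_sq {R : realType} {n : nat} (u v : 'rV[R]_n) : dot u v ^+ 2 <= dot u u * dot v v.
Proof.
have H t : 0 <= dot u u + 2 * t * dot u v + t ^+ 2 * dot v v.
  have := dot_ge0 (u + t *: v).
  rewrite !dotDl !dotDr !dotZl !dotZr (dotC v u).
  by move=> h; apply: le_trans h _; rewrite le_eqVlt; apply/orP; left; apply/eqP; ring.
have hv := dot_ge0 v; have hu := dot_ge0 u.
set A := dot u u in H hu *; set B := dot u v in H *; set C := dot v v in H hv *.
case: (ltrP 0 C) => hC.
  have := H (- B / C).
  have e : A + 2 * (- B / C) * B + (- B / C) ^+ 2 * C = A - B^+2 / C.
    by field; rewrite gt_eqF.
  rewrite e subr_ge0 => h.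
  by rewrite -ler_pdivrMr.
have C0 : C = 0 by apply/eqP; rewrite eq_le hC hv.
rewrite C0 mulr0.
case: (eqVneq B 0) => [->|hB]; first by rewrite expr0n.
have := H (- (A + 1) / (2 * B)).
have e : A + 2 * (- (A + 1) / (2 * B)) * B + (- (A + 1) / (2 * B)) ^+ 2 * C = -1.
  by rewrite C0; field.
by rewrite e; lra.
Qed.

Lemma CS {R : realType} {n : nat} (u v : 'rV[R]_n) : dot u v <= enorm u * enorm v.
Proof.
case: (lerP (dot u v) 0) => h.
  by apply: le_trans h _; rewrite mulr_ge0 // enorm_ge0.
rewrite /enorm -sqrtrM ?dot_ge0 //.
rewrite -(ger0_norm (ltW h)) -sqrtr_sqr ler_sqrt ?CS_sq //.
by rewrite mulr_ge0 // dot_ge0.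
Qed.

Lemma quad_lem {R : realType} (A K : R) :
  0 <= K -> (forall t, 0 < t <= 1 -> 0 <= t * A + t ^+ 2 * K) -> 0 <= A.
Proof.
move=> K0 H; rewrite leNgt; apply/negP => A0.
set t := Num.min 1 (- A / (2 * (K + 1))).
have K1 : 0 < 2 * (K + 1) by lra.
have t0 : 0 < t by rewrite lt_min ltr01 /= divr_gt0 // ?oppr_gt0.
have t1 : t <= 1 by rewrite ge_min lexx.
have t2 : t <= - A / (2 * (K + 1)) by rewrite ge_min lexx orbT.
rewrite ler_pdivlMr // in t2.
have h := H t _.
have {}h : 0 <= t * (A + t * K) by rewrite mulrDr mulrA -expr2; apply: h; rewrite t0 t1.
rewrite pmulr_rge0 // in h.
nra.
Qed.

Lemma grad_ineq {R : realType} {n : nat} (X : set 'rV[R]_n) F g x w :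
  convex_set_E X -> convex_fun_on X F -> is_gradient_at F g x -> X x -> X w ->
  F x + dot g (w - x) <= F w.
Proof.
move=> cX cF Hg Xx Xw.
set d := w - x.
apply/ler_addgt0Pr => e e0.
have nd := enorm_ge0 d.
set K := enorm d + 1.
have K0 : 0 < K by rewrite /K; lra.
have [del [del0 Hd]] := Hg (e / K) (divr_gt0 e0 K0).
set t := Num.min 1 (del / (2 * K)).
have K1 : 0 < 2 * K by lra.
have t0 : 0 < t by rewrite lt_min ltr01 /= divr_gt0.
have t1 : t <= 1 by rewrite ge_min lexx.
have t2 : t <= del / (2 * K) by rewrite ge_min lexx orbT.
rewrite ler_pdivlMr // in t2.
set p := t *: w + (1 - t) *: x.
have Xp : X p by apply: cX => //; rewrite (ltW t0) t1.
have ep : p - x = t *: d by apply/rowP => i; rewrite !mxE; ring.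
have hp := Hd p.
rewrite ep enormZ ?(ltW t0) // dotZr in hp.
have lt : t * enorm d < del.
  have := mulr_ge0 (ltW t0) nd; rewrite /K in t2; nra.
have {}hp := hp lt.
have cv := cF w x t Xw Xx _.
rewrite (ltW t0) t1 /= in cv.
have {}cv := cv isT.
rewrite -/p in cv.
move: hp; rewrite ler_norml => /andP [hp1 _].
have ee : e / K * (t * enorm d) = t * (e * (enorm d / K)) by rewrite /K; field; lra.
rewrite ee in hp1.
have fr : enorm d / K <= 1 by rewrite ler_pdivrMr // mul1r /K; lra.
have fr2 : e * (enorm d / K) <= e by rewrite -[X in _ <= X]mulr1; apply: ler_wpM2l => //; lra.
suff : t * (F x + dot g d - (F w + e)) <= 0.
  by rewrite pmulr_rle0 // subr_le0.
nra.
Qed.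

Lemma dot_lin {R : realType} {n : nat} (g p q : 'rV[R]_n) t :
  dot g (p + t *: q) = dot g p + t * dot g q.
Proof. by rewrite dotDr dotZr. Qed.

Lemma dot_expand {R : realType} {n : nat} (p q : 'rV[R]_n) t :
  dot (p + t *: q) (p + t *: q) = dot p p + 2 * t * dot p q + t ^+ 2 * dot q q.
Proof. rewrite !dotDl !dotDr !dotZl !dotZr (dotC q p); ring. Qed.

Lemma three_point {R : realType} {n : nat} (X : set 'rV[R]_n) (g a a' y w : 'rV[R]_n) (b : R) :
  convex_set_E X -> 0 < b ->
  is_argmin X (fun v => dot g (v - a) + b / 2 * enorm (v - a') ^+ 2) y -> X w ->
  dot g (y - a) + b / 2 * enorm (y - a') ^+ 2 + b / 2 * enorm (w - y) ^+ 2
    <= dot g (w - a) + b / 2 * enorm (w - a') ^+ 2.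
Proof.
move=> cX b0 [Xy Hy] Xw.
have Hy' : forall v, X v -> dot g (y - a) + b / 2 * dot (y - a') (y - a')
    <= dot g (v - a) + b / 2 * dot (v - a') (v - a').
  by move=> v Xv; rewrite -!enorm_sq; exact: Hy.
rewrite !enorm_sq.
set u := w - y.
set A := dot g u + b * dot (y - a') u.
set Q := dot u u.
have Q0 : 0 <= Q := dot_ge0 u.
have HA : 0 <= A.
  apply: (@quad_lem _ A (b / 2 * Q)); first by apply: mulr_ge0 => //; lra.
  move=> t /andP [t0 t1].
  have Xp : X (t *: w + (1 - t) *: y) by apply: cX => //; rewrite (ltW t0) t1.
  have := Hy' _ Xp.
  have e1 : t *: w + (1 - t) *: y - a = (y - a) + t *: u by apply/rowP => i; rewrite !mxE; ring.
  have e2 : t *: w + (1 - t) *: y - a' = (y - a') + t *: u by apply/rowP => i; rewrite !mxE; ring.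
  rewrite e1 e2 dot_lin dot_expand -subr_ge0.
  suff -> : t * A + t ^+ 2 * (b / 2 * Q) =
    dot g (y - a) + t * dot g u + b / 2 * (dot (y - a') (y - a') + 2 * t * dot (y - a') u + t ^+ 2 * Q)
    - (dot g (y - a) + b / 2 * dot (y - a') (y - a')) by [].
  by rewrite /A; field.
have f1 : w - a = (y - a) + 1 *: u by apply/rowP => i; rewrite !mxE; ring.
have f2 : w - a' = (y - a') + 1 *: u by apply/rowP => i; rewrite !mxE; ring.
rewrite f1 f2 dot_lin dot_expand -subr_ge0.
suff -> : dot g (y - a) + 1 * dot g u + b / 2 * (dot (y - a') (y - a') + 2 * 1 * dot (y - a') u + 1 ^+ 2 * Q) -
   (dot g (y - a) + b / 2 * dot (y - a') (y - a') + b / 2 * Q) = A by [].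
by rewrite /A; field.
Qed.

Lemma descent {R : realType} {n : nat} (X : set 'rV[R]_n) F gF (Lc : R) (x y : 'rV[R]_n) :
  convex_set_E X -> convex_fun_on X F -> (forall w, X w -> is_gradient_at F (gF w) w) ->
  lipschitz_on_E X gF Lc -> 0 <= Lc -> X x -> X y ->
  F y <= F x + dot (gF x) (y - x) + Lc / 2 * dot (y - x) (y - x).
Proof.
move=> cX cF Hg HL L0 Xx Xy.
set d := y - x. set G := dot (gF x) d. set Q := dot d d.
have Q0 : 0 <= Q := dot_ge0 d.
pose p t := t *: y + (1 - t) *: x.
have Xp t : 0 <= t <= 1 -> X (p t) by move=> ht; apply: cX.
have pd t : p t = x + t *: d by apply/rowP => i; rewrite !mxE; ring.
have key : forall M : nat, F y <= F x + G + Lc / 2 * Q + Lc * Q / (2 * M.+1%:R).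
  move=> M.
  have M0 : 0 < M.+1%:R :> R by rewrite ltr0n.
  set s := (M.+1%:R : R)^-1.
  have s0 : 0 < s by rewrite invr_gt0.
  have sM : M.+1%:R * s = 1 by rewrite mulfV // gt_eqF.
  have tj j : (j <= M.+1)%N -> 0 <= j%:R * s <= 1.
    move=> hj; rewrite mulr_ge0 ?ler0n ?(ltW s0) //=.
    have : j%:R * s <= M.+1%:R * s by apply: ler_wpM2r; [exact: ltW| rewrite ler_nat].
    by rewrite sM.
  have ind : forall j, (j <= M.+1)%N ->
      F (p (j%:R * s)) <= F x + j%:R * s * G + Lc * Q * (j%:R * (j%:R + 1)) * s ^+ 2 / 2.
    elim => [|j IH] hj.
      have -> : p (0%:R * s) = x by rewrite pd mul0r scale0r addr0.
      by rewrite !mul0r !mulr0 !mul0r !addr0.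
    have {}IH := IH (ltnW hj).
    have X0 := Xp _ (tj _ (ltnW hj)).
    have X1 := Xp _ (tj _ hj).
    have gi := @grad_ineq _ _ X _ _ _ _ cX cF (Hg _ X1) X1 X0.
    have e1 : p (j%:R * s) - p (j.+1%:R * s) = (- s) *: d.
      by rewrite !pd; apply/rowP => i; rewrite !mxE mulrS; ring.
    rewrite e1 dotZr in gi.
    have e2 : dot (gF (p (j.+1%:R * s))) d = G + dot (gF (p (j.+1%:R * s)) - gF x) d.
      by rewrite dotBl /G; ring.
    have cs := CS (gF (p (j.+1%:R * s)) - gF x) d.
    have lip := HL _ _ X1 Xx.
    have e3 : p (j.+1%:R * s) - x = (j.+1%:R * s) *: d.
      by rewrite pd; apply/rowP => i; rewrite !mxE; ring.
    rewrite e3 enormZ in lip; last by case/andP: (tj _ hj).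
    have nd := enorm_ge0 d.
    have lip2 : enorm (gF (p (j.+1%:R * s)) - gF x) * enorm d <= Lc * (j.+1%:R * s * Q).
      have -> : Lc * (j.+1%:R * s * Q) = Lc * (j.+1%:R * s * enorm d) * enorm d.
        by rewrite /Q -enorm_sq; ring.
      by apply: ler_wpM2r.
    set D := dot (gF (p (j.+1%:R * s)) - gF x) d in e2 cs.
    set gd := dot (gF (p (j.+1%:R * s))) d in gi e2.
    have h3 : s * gd <= s * G + s * (Lc * (j.+1%:R * s * Q)).
      rewrite -mulrDr; apply: ler_wpM2l; [exact: ltW|]; rewrite e2; lra.
    have E : j%:R * s * G + Lc * Q * (j%:R * (j%:R + 1)) * s ^+ 2 / 2 + (s * G + s * (Lc * (j.+1%:R * s * Q)))
      = j.+1%:R * s * G + Lc * Q * (j.+1%:R * (j.+1%:R + 1)) * s ^+ 2 / 2.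
      by rewrite mulrS; field.

    move: gi IH h3; set a1 := F (p _); set a2 := F (p _); move=> gi IH h3.
    lra.
  have := ind _ (leqnn _).
  have -> : p (M.+1%:R * s) = y by rewrite sM pd scale1r /d addrC subrK.
  have E : F x + M.+1%:R * s * G + Lc * Q * (M.+1%:R * (M.+1%:R + 1)) * s ^+ 2 / 2
     = F x + G + Lc / 2 * Q + Lc * Q / (2 * M.+1%:R).
    by rewrite /s; field; rewrite -mulrS pnatr_eq0.
  by rewrite E.
apply/ler_addgt0Pr => e e0.
have := key (Num.truncn (Lc * Q / (2 * e))).
set m := (Num.truncn _).+1%:R.
have hm : Lc * Q / (2 * e) < m by exact: truncnS_gt.
have m0 : 0 < m by apply: le_lt_trans hm; apply: divr_ge0; [exact: mulr_ge0 | lra].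
have : Lc * Q / (2 * m) < e.
  have e2 : 0 < 2 * e by lra.
  rewrite ltr_pdivrMr ?mulr_gt0 // in hm.
  rewrite ltr_pdivrMr; last by rewrite mulr_gt0.
  by have -> : e * (2 * m) = m * (2 * e) by ring.
move=> h1 h2; apply: (le_trans h2); rewrite lerD2l; exact: ltW.
Qed.

Theorem lemma5 (R : realType) (n d : nat)
  (X : set 'rV[R]_n) (Xi : set 'rV[R]_d)
  (f h : 'rV[R]_n -> R) (gf : 'rV[R]_n -> 'rV[R]_n) (Lf : R)
  (ht : R -> 'rV[R]_n -> R) (ght : R -> 'rV[R]_n -> 'rV[R]_n)
  (mubar kappa L : R)
  (oracle : R -> 'rV[R]_n -> 'rV[R]_d -> 'rV[R]_n)
  (N : nat) (m : nat -> nat) (alpha beta theta : nat -> R) (c mu0 : R)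
  (xi : nat -> nat -> 'rV[R]_d)
  (x y z : nat -> 'rV[R]_n) (xstar : 'rV[R]_n) (k : nat) :
  (* standing assumptions *)
  closed X -> convex_set_E X -> (exists x0, X x0) ->
  convex_fun_on X f -> (forall w, X w -> is_gradient_at f (gf w) w) ->
  lipschitz_on_E X gf Lf -> 0 <= Lf ->
  convex_fun_on X h ->
  0 < mubar -> smoothing_function X h ht ght mubar kappa L ->
  (* optimal solution *)
  is_argmin X (fun w => f w + h w) xstar ->
  (* parameters of AdaSMSAG *)
  (1 <= N)%N -> 0 < c -> 0 < mu0 <= mubar ->
  (forall j, (1 <= j <= N)%N ->
     [/\ (1 <= m j)%N, 0 < alpha j < 1, 0 < beta j & 0 < theta j]) ->
  (forall j i, (1 <= j <= N)%N -> (i < m j)%N -> Xi (xi j i)) ->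
  (* iterates *)
  z 0%N = y 0%N -> X (y 0%N) ->
  (let mu := fun j : nat => c * mu0 / (j%:R + c) in
   let G := fun j : nat =>
     (m j)%:R^-1 *: \sum_(i < m j) oracle (mu j) (x j) (xi j i) in
   (forall j, (1 <= j <= N)%N ->
     [/\ x j = alpha j *: z j.-1 + (1 - alpha j) *: y j.-1,
         is_argmin X (fun w => dot (G j) (w - x j)
                               + beta j / 2 * enorm (w - x j) ^+ 2) (y j) &
         is_argmin X (fun w => dot (G j) (w - x j)
                               + theta j / 2 * enorm (w - z j.-1) ^+ 2) (z j)]) ->
   let psit := fun (mu' : R) (w : 'rV[R]_n) => f w + ht mu' w in
   let gpsit := fun (mu' : R) (w : 'rV[R]_n) => gf w + ght mu' w in
   let delta := fun j : nat => G j - gpsit (mu j) (x j) in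
   let D2 := fun j : nat => enorm (xstar - z j) ^+ 2 / 2 in
   let Delta := fun j : nat => psit (mu j) (y j) - psit (mu j) xstar in
   let Gamma := fun j : nat =>
     Delta j - (1 - alpha j) * Delta j.-1
     - 2 * kappa * (1 - alpha j) * (mu j.-1 - mu j) in
   let Lk := Lf + L / mu k in
   (* the lemma, for a given k *)
   (1 <= k <= N)%N ->
   alpha k * beta k - theta k <= 0 ->
   0 < beta k - Lk ->
   Gamma k <= alpha k * theta k * (D2 k.-1 - D2 k)
              + enorm (delta k) ^+ 2 / (2 * (beta k - Lk))
              + alpha k * dot (delta k) (xstar - z k.-1)).
Proof.
move=> cloX cX neX cf gradf Lipf Lf0 ch mub0 sm opt N1 c0 mu0p par xiX z0 Xy0.
move=> mu G iter psit gpsit delta D2 Delta Gamma Lk hk hab hbL.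
case: sm => [smA [_ [smK [kap0 [L0 smL]]]]].
have [m1 /andP [a0 a1] b0 th0] := par k hk.
have [xkdef yopt zopt] := iter k hk.
have [Xy1 Xz1] : X (y k.-1) /\ X (z k.-1).
  case: k hk {xkdef yopt zopt m1 a0 a1 b0 th0 hab hbL Lk Gamma} => [//|k'] hk /=.
  case: k' hk => [|k''] hk; first by rewrite z0.
  have hk' : (1 <= k''.+1 <= N)%N by move: hk; case/andP => _ h2; rewrite /= ltnW.
  by have [_ [? _] [? _]] := iter _ hk'.
have Xyk := yopt.1.
have Xzk := zopt.1.
have Xxs := opt.1.
have Xxk : X (x k) by rewrite xkdef; apply: cX => //; rewrite (ltW a0) (ltW a1).
have mupos j : 0 < mu j <= mubar.
  have jc : 0 < j%:R + c by have := ler0n R j; lra.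
  case/andP: mu0p => m00 m0b.
  rewrite /mu divr_gt0 ?mulr_gt0 //=.
  apply: le_trans m0b; rewrite ler_pdivrMr //.
  have := ler0n R j; nra.
have mule : mu k <= mu k.-1.
  rewrite /mu; apply: ler_wpM2l; first by case/andP: mu0p => ? ?; apply: mulr_ge0; lra.
  have p1 : 0 < k.-1%:R + c by have := ler0n R k.-1; lra.
  have p2 : 0 < k%:R + c by have := ler0n R k; lra.
  rewrite lef_pV2 ?posrE // lerD2r ler_nat; exact: leq_pred.
have [gradh [_ convh]] := smA _ (mupos k).
have lipH := smL _ (mupos k).
have muk0 : 0 < mu k by case/andP: (mupos k).
have Lmu0 : 0 <= L / mu k by apply: divr_ge0; lra.
have F1 := @descent _ _ X f gf Lf (x k) (y k) cX cf gradf Lipf Lf0 Xxk Xyk.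
have F2 := @descent _ _ X (ht (mu k)) (ght (mu k)) (L / mu k) (x k) (y k) cX convh gradh lipH Lmu0 Xxk Xyk.
have G1 := @grad_ineq _ _ X f (gf (x k)) (x k) xstar cX cf (gradf _ Xxk) Xxk Xxs.
have G2 := @grad_ineq _ _ X (ht (mu k)) (ght (mu k) (x k)) (x k) xstar cX convh (gradh _ Xxk) Xxk Xxs.
have G3 := @grad_ineq _ _ X f (gf (x k)) (x k) (y k.-1) cX cf (gradf _ Xxk) Xxk Xy1.
have G4 := @grad_ineq _ _ X (ht (mu k)) (ght (mu k) (x k)) (x k) (y k.-1) cX convh (gradh _ Xxk) Xxk Xy1.
set a := alpha k in a0 a1 xkdef hab *. set b := beta k in b0 yopt hab hbL *.
set th := theta k in th0 zopt hab *.
set xk := x k in xkdef yopt zopt Xxk F1 F2 G1 G2 G3 G4 *.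
set yk := y k in yopt Xyk F1 F2 *. set zk := z k in zopt Xzk *.
set y1 := y k.-1 in xkdef Xy1 G3 G4 *. set z1 := z k.-1 in xkdef zopt Xz1 *.
set gk := G k in yopt zopt *. set gfx := gf xk in F1 G1 G3 *.
set ghx := ght (mu k) xk in F2 G2 G4 *.
set dk := delta k.
have edk : dk = gk - (gfx + ghx) by [].
have gsplit w : dot gk w = dot dk w + dot gfx w + dot ghx w.
  rewrite edk dotBl dotDl; ring.
set wb := a *: zk + (1 - a) *: y1.
have Xwb : X wb by apply: cX => //; rewrite (ltW a0) (ltW a1).
have Y := yopt.2 _ Xwb.
have ewb : wb - xk = a *: (zk - z1).
  by rewrite /wb xkdef; apply/rowP => i; rewrite !mxE; ring.
rewrite /= ewb dotZr enormZ ?(ltW a0) // exprMn in Y.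
have Yb : b * a ^+ 2 * enorm (zk - z1) ^+ 2 <= a * th * enorm (zk - z1) ^+ 2.
  rewrite -subr_ge0.
  have -> : a * th * enorm (zk - z1) ^+ 2 - b * a ^+ 2 * enorm (zk - z1) ^+ 2
     = a * ((th - a * b) * enorm (zk - z1) ^+ 2) by ring.
  apply: mulr_ge0; first exact: ltW.
  apply: mulr_ge0; [lra | exact: sqr_ge0].
have Z := @three_point _ _ X gk xk z1 zk xstar th cX th0 zopt Xxs.
have ez1 : zk - xk = (z1 - xk) + 1 *: (zk - z1) by apply/rowP => i; rewrite !mxE; ring.
have ez2 : xstar - xk = (z1 - xk) + 1 *: (xstar - z1) by apply/rowP => i; rewrite !mxE; ring.
rewrite ez1 ez2 !dot_lin !mul1r in Z.
have Za := ler_wpM2l (ltW a0) Z.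
set cc := b - Lk.
set u := yk - xk.
have Yg : - dot dk u - cc / 2 * dot u u <= dot dk dk / (2 * cc).
  have := dot_ge0 (dk + cc *: u); rewrite dot_expand => hh.
  rewrite -subr_ge0.
  have -> : dot dk dk / (2 * cc) - (- dot dk u - cc / 2 * dot u u)
    = (dot dk dk + 2 * cc * dot dk u + cc ^+ 2 * dot u u) / (2 * cc).
    by field; rewrite /cc gt_eqF.
  by apply: divr_ge0 => //; rewrite /cc; lra.
have eab : a *: (xstar - xk) + (1 - a) *: (y1 - xk) = a *: (xstar - z1).
  by rewrite xkdef; apply/rowP => i; rewrite !mxE; ring.
have Cf : a * dot gfx (xstar - xk) + (1 - a) * dot gfx (y1 - xk) = a * dot gfx (xstar - z1).
  by rewrite -!dotZr -dotDr eab.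
have Ch : a * dot ghx (xstar - xk) + (1 - a) * dot ghx (y1 - xk) = a * dot ghx (xstar - z1).
  by rewrite -!dotZr -dotDr eab.
have G1a := ler_wpM2l (ltW a0) G1.
have a1' : 0 <= 1 - a by lra.
have G3a := ler_wpM2l a1' G3.
have G2a := ler_wpM2l (ltW a0) G2.
have G4a := ler_wpM2l a1' G4.
have K1 := smK _ _ _ Xy1 (mupos k.-1) (mupos k).
have K2 := smK _ _ _ Xxs (mupos k.-1) (mupos k).
have en : `|mu k.-1 - mu k| = mu k.-1 - mu k by rewrite ger0_norm // subr_ge0.
rewrite en ler_norml in K1; rewrite en ler_norml in K2.
case/andP: K1 => K1a K1b; case/andP: K2 => K2a K2b.
have Ka : (1 - a) * (ht (mu k) y1 - ht (mu k) xstar)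
   <= (1 - a) * (ht (mu k.-1) y1 - ht (mu k.-1) xstar + 2 * kappa * (mu k.-1 - mu k)).
  by apply: ler_wpM2l => //; lra.
rewrite /Gamma /Delta /D2 /psit -/a -/y1 -/z1 -/yk -/zk !enorm_sq.
rewrite -/u in F1 F2.
move: (gsplit u) (gsplit (zk - z1)) (gsplit (xstar - z1)).
have ccU : cc / 2 * dot u u = b / 2 * dot u u - Lf / 2 * dot u u - L / mu k / 2 * dot u u.
  by rewrite /cc /Lk; ring.
rewrite !enorm_sq -/u in Y Yb Za.
move=> s1 s2 s3.
set E := dot dk dk / (2 * cc) in Yg *.
set V := dot (zk - z1) (zk - z1) in Y Yb Za *.
have S1 : f yk + ht (mu k) yk <= f xk + ht (mu k) xk + (dot gk u + b / 2 * dot u u) + (- dot dk u - cc / 2 * dot u u).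
  lra.
have S2 : f yk + ht (mu k) yk <= f xk + ht (mu k) xk + a * dot gk (zk - z1) + a * th / 2 * V + E.
  lra.
have S3 : f yk + ht (mu k) yk <= f xk + ht (mu k) xk + a * dot gk (xstar - z1) + a * th / 2 * (dot (xstar - z1) (xstar - z1) - dot (xstar - zk) (xstar - zk)) + E.
  lra.
have S4 : f xk + a * dot gfx (xstar - z1) <= a * f xstar + (1 - a) * f y1.
  lra.
have S5 : ht (mu k) xk + a * dot ghx (xstar - z1) <= a * ht (mu k) xstar + (1 - a) * ht (mu k) y1.
  lra.
have s3a : a * dot gk (xstar - z1) = a * dot dk (xstar - z1) + a * dot gfx (xstar - z1) + a * dot ghx (xstar - z1).
  by rewrite s3; ring.
have S6 : f yk + ht (mu k) yk <= a * f xstar + (1 - a) * f y1 + a * ht (mu k) xstar + (1 - a) * ht (mu k) y1 + a * th / 2 * (dot (xstar - z1) (xstar - z1) - dot (xstar - zk) (xstar - zk)) + E + a * dot dk (xstar - z1).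
  lra.
lra.
Qed.
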